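(* Let $p$ be an odd prime and $b,c\in\mathbb Z$. For every integer $k$ with $-(p-2)\le k\le p-2$, $$(4c-b^2)\binom{p-2}{k}_{b,c}\equiv\begin{cases}\binom{p-1}{-1}_{b,c}+c\binom{p-1}{1}_{b,c}-b \pmod p & \text{if } k=0,\\[2mm] (k+1)\binom{p-1}{k-1}_{b,c}-(k-1)c\binom{p-1}{k+1}_{b,c}\pmod p & \text{if } 0<|k|\le p-2.\end{cases}$$
   Context: For $n\in\mathbb N$ and $b,c\in\mathbb Z$, the generalized trinomial coefficients $\binom{n}{k}_{b,c}$ ($k\in\mathbb Z$) are the integers defined by the Laurent polynomial identity $\left(x+b+\frac{c}{x}\right)^n=\sum_{k\in\mathbb Z}\binom{n}{k}_{b,c}x^k$; in particular $\binom nk_{b,c}=0$ when $|k|>n$. *)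

(* Defs.v *)
From mathcomp Require Import all_boot all_order all_algebra.
Set Implicit Arguments. Unset Strict Implicit. Unset Printing Implicit Defensive.
Import Order.TTheory GRing.Theory Num.Theory.
Local Open Scope ring_scope.

(* Generalized trinomial coefficient  binom(n,k)_{b,c} : the coefficient of
   x^k in the Laurent polynomial (x + b + c/x)^n.  Since
   (x + b + c/x)^n = x^(-n) (x^2 + b x + c)^n, this is the coefficient of
   x^(n+k) in the ordinary polynomial (x^2 + b x + c)^n over int, and 0 when
   n + k < 0 (it is automatically 0 when n + k > 2n, i.e. k > n). *)
Definition gtrinom (b c : int) (n : nat) (k : int) : int :=
  if (0 <= n%:Z + k) then
    (('X^2 + b *: 'X + c%:P : {poly int}) ^+ n)`_(absz (n%:Z + k))
  else 0.

(* Main.v *)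
Require Import Defs.
From mathcomp Require Import all_boot all_order all_algebra all_field.
From mathcomp Require Import ring zify.
Import Order.TTheory GRing.Theory Num.Theory.
Local Open Scope ring_scope.

Lemma gmap (R : comNzRingType) (b c : int) m (k : int) i : m%:Z + k = i%:Z ->
  ((gtrinom b c m k)%:~R : R) =
  (('X^2 + (b%:~R : R) *: 'X + (c%:~R)%:P) ^+ m)`_i.
Proof.
move=> h; rewrite /gtrinom h lez_nat /= -(coef_map (intmul 1)) rmorphXn /=.
by rewrite !rmorphD /= map_polyXn map_polyZ map_polyX map_polyC.
Qed.

Lemma frobD (R : comNzRingType) (p : nat) (x y : R) :
  p \in [pchar R] -> (x + y) ^+ p = x ^+ p + y ^+ p.
Proof. move=> hp; exact: (pFrobenius_autD_comm hp (mulrC x y)). Qed.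

Lemma coefXderiv (R : nzSemiRingType) (A : {poly R}) m :
  ('X * A^`())`_m = A`_m *+ m.
Proof. by rewrite coefXM; case: m => [|m] /=; [rewrite mulr0n | rewrite coef_deriv]. Qed.

Lemma key (p n : nat) (b c : 'F_p) j : prime p -> p = n.+2 -> (j <= n.*2)%N ->
  let P := 'X^2 + b *: 'X + c%:P in
  (4 * c - b ^+ 2) * (P ^+ n)`_j =
   (j.+3)%:R * (P ^+ n.+1)`_j - (j.+1)%:R * c * (P ^+ n.+1)`_j.+2
   - (if j == n then b else 0).
Proof.
move=> pr hpn hj P.
have chF := pchar_Fp pr.
have chP : p \in [pchar {poly 'F_p}] by rewrite pchar_poly.
set A := P ^+ n.+1; set B := P ^+ n.
have hpR : (p%:R : {poly 'F_p}) = 0 by apply/eqP; move: chP => /andP[_].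
have hn1 : (n.+1%:R : {poly 'F_p}) = -1.
  by apply/eqP; rewrite -subr_eq0 opprK -(natrD _ n.+1 1) addn1 -hpn hpR.
have dA : 'X * A^`() = - (('X *+ 2 + b%:P) * 'X * B).
  rewrite /A deriv_exp /= -mulr_natr hn1 /P !derivE -/P -/B alg_polyC; ring.
have hA : A = P * B by rewrite /A exprS.
have hPp : P ^+ p = P ^+ 2 * B by rewrite -exprD add2n -hpn.
have E : 'X^2 * ('X * A^`()) + 'X^2 * A *+ 3 - c%:P * ('X * A^`()) + c%:P * A
    = P ^+ p + (4 * c - b ^+ 2)%:P * ('X^2 * B).
  rewrite dA hA hPp !(rmorphB, rmorphM, rmorphXn, rmorph_nat) /P -!mul_polyC.
  ring.
have Fr : P ^+ p = 'X^(p.*2) + b *: 'X^p + c%:P.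
  rewrite /P !frobD // -exprM mul2n exprZn -rmorphXn.
  have ex (x : 'F_p) : x ^+ p = x by have := expf_card x; rewrite card_Fp.
  by rewrite !ex.
move: (congr1 (fun q : {poly 'F_p} => q`_j.+2) E) => /=.
rewrite Fr !(coefD, coefB, coefMn, coefCM, coefXnM, coefXderiv, coefZ, coefXn, coefC, coefN) /=.
have -> : (j.+2 == p.*2) = false.
  by apply/negbTE; rewrite hpn; apply/eqP => h; move: hj; rewrite -!addnn in h *; lia.
have -> : (j.+2 == p) = (j == n) by rewrite hpn eqSS.
rewrite !subSS !subn0 => E2.
have n3 : (j.+3%:R : 'F_p) = j%:R + 3 by rewrite -(addn3 j) natrD.
have n2 : (j.+2%:R : 'F_p) = j%:R + 2 by rewrite -(addn2 j) natrD.
have n1 : (j.+1%:R : 'F_p) = j%:R + 1 by rewrite -(addn1 j) natrD.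
rewrite -[A`_j *+ j]mulr_natr -[A`_j.+2 *+ j.+2]mulr_natr n2 in E2; rewrite n3 n1.
case: (j == n) E2 => /= E2; rewrite ?mulr1 ?mulr0 ?subr0 ?addr0 ?add0r in E2 *.
  by apply: (addrI b); rewrite -E2; ring.
by rewrite -E2; ring.
Qed.

Theorem lemma2p1 (p : nat) (b c k : int) :
  prime p -> odd p ->
  - (p%:Z - 2) <= k <= p%:Z - 2 ->
  ((4 * c - b ^+ 2) * gtrinom b c p.-2 k =
     (if k == 0 then
        gtrinom b c p.-1 (-1) + c * gtrinom b c p.-1 1 - b
      else
        (k + 1) * gtrinom b c p.-1 (k - 1)
        - (k - 1) * c * gtrinom b c p.-1 (k + 1))
   %[mod p%:Z])%Z.
Proof.
move=> pr op /andP[hk1 hk2].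
have p3 : (2 < p)%N.
  have := prime_gt1 pr; rewrite leq_eqVlt => /orP[/eqP h|//].
  by rewrite -h in op.
set n := p.-2.
have hpn : p = n.+2 by rewrite /n; lia.
have hp1 : p.-1 = n.+1 by rewrite hpn.
rewrite hp1.
set j := absz (n%:Z + k).
have hj : n%:Z + k = j%:Z by rewrite /j gez0_abs //; lia.
have hj2 : (j <= n.*2)%N by rewrite -addnn; lia.
apply/eqP; rewrite eqz_mod_dvd (dvdz_pcharf (pchar_Fp pr)) rmorphB /= subr_eq0.
apply/eqP.
have chF := pchar_Fp pr.
have hn : (n%:R : 'F_p) = -2.
  apply/eqP; rewrite -subr_eq0 opprK -(natrD _ n 2) addn2 -hpn.
  by move: chF => /andP[_].
rewrite rmorphM /= (gmap _ _ _ _ _ _ hj) rmorphB rmorphM /=.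
rewrite rmorphXn /= (_ : (4%:~R : 'F_p) = 4) //.
have := @key _ _ (b%:~R) (c%:~R) _ pr hpn hj2 => /= ->.
have hk : k = j%:Z - n%:Z by lia.
case: (k =P 0) => [k0|kn0].
  have jn : j = n by apply/eqP; rewrite -eqz_nat; lia.
  rewrite jn eqxx !rmorphB !rmorphD !rmorphM /=.
  rewrite (@gmap _ _ _ _ (-1) (n)); last by lia.
  rewrite (@gmap _ _ _ _ (1) (n.+2)); last by lia.
  have n3 : (n.+3%:R : 'F_p) = n%:R + 3 by rewrite -(addn3 n) natrD.
  have n1 : (n.+1%:R : 'F_p) = n%:R + 1 by rewrite -(addn1 n) natrD.
  rewrite n3 n1 hn; ring.
have jn : (j == n) = false by apply/eqP => jn; apply: kn0; lia.
rewrite jn subr0 !rmorphB !rmorphM !rmorphD /=.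
rewrite (@gmap _ _ _ _ (k - 1) (j)); last by lia.
rewrite (@gmap _ _ _ _ (k + 1) (j.+2)); last by lia.
rewrite hk rmorphB /= rmorph1 rmorphN1.
have -> : ((j%:Z)%:~R : 'F_p) = j%:R by [].
have -> : ((n%:Z)%:~R : 'F_p) = n%:R by [].
rewrite hn.
have n3 : (j.+3%:R : 'F_p) = j%:R + 3 by rewrite -(addn3 j) natrD.
have n1 : (j.+1%:R : 'F_p) = j%:R + 1 by rewrite -(addn1 j) natrD.
rewrite n3 n1; ring.
Qed.
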